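(* Let $r_0>0$ and let $(X_t)_{t\in(0,r_0]}$ be a family of Banach spaces with bounded linear injective operators $j_{s,r}\in L(X_r;X_s)$ with dense image for $0<s\le r\le r_0$, such that $j_{s,s}=\mathrm{Id}$ and $j_{s,c}j_{c,r}=j_{s,r}$ for $0<s\le c\le r\le r_0$. Let $\mathcal{B}$ be a Banach space and $U\subset\mathcal{B}$ a non-empty open convex set. Let $(Q_{s,r}(u))$ be an equivariant $(\gamma,0)$-regular family, write $Q_s(u)=Q_{s,s}(u)\in L(X_s)$, and suppose $\mathbf{1}-Q_s(u)$ is invertible for all $0<s\le r_0$, $u\in U$, with inverse $R_s(u)=(\mathbf{1}-Q_s(u))^{-1}$ uniformly bounded for $\epsilon<s\le r_0$ (and $u\in U$) for every $\epsilon>0$. Then the family $R_{s,r}(u)=j_{s,r}R_r(u)$, $0<s<r\le r_0$, is again equivariant and $(\gamma,0)$-regular.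
   Context: For $\gamma>0$ with $\gamma\le r_0$, let $I_0=\{(s,r)\in(0,r_0]^2:s\le r\}$. A family of operators $M_{s,r}(u)\in L(X_r,X_s)$, $(s,r)\in I_0$, $u\in U$, is equivariant and $(\gamma,0)$-regular if (i) $j_{s,s'}M_{s',r'}(u)=M_{s,r}(u)j_{r,r'}$ for all $(s,r),(s',r')\in I_0$ with $s<s'$, $r<r'$, and (ii) $u\mapsto M_{s,r}(u)\in L(X_r,X_s)$ is $C^t$ for all $(s,r)\in I_0$ and $0\le t<\gamma\wedge(r-s)$. For $t=k+\alpha$ ($k\in\mathbb{N}_0$, $\alpha\in(0,1]$), $C^t$ means $k$ times Fréchet differentiable with bounded derivatives and $\alpha$-Hölder $k$-th derivative; $C^0$ means continuous. *)

(* Defs.v *)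
From HB Require Import structures.
From mathcomp Require Import all_boot all_order all_algebra.
From mathcomp Require Import all_classical all_reals all_analysis.
Set Implicit Arguments. Unset Strict Implicit. Unset Printing Implicit Defensive.
Import Order.TTheory GRing.Theory Num.Theory.
Import numFieldNormedType.Exports.
Local Open Scope classical_set_scope.
Local Open Scope ring_scope.

Section Defs.
Variable R : realType.

Definition bdd_lin (V W : normedModType R) (f : V -> W) : Prop :=
  (forall (a : R) (x y : V), f (a *: x + y) = a *: f x + f y) /\
  exists C : R, forall x, `|f x| <= C * `|x|.

Definition upd (B : Type) (h : nat -> B) (j : nat) (b : B) : nat -> B :=
  fun m => if m == j then b else h m.

Definition hcons (B : Type) (v : B) (h : nat -> B) : nat -> B :=
  fun m => if m is m'.+1 then h m' else v.

Definition hprod (B : normedModType R) (i : nat) (h : nat -> B) : R :=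
  \prod_(m < i) `|h m|.

Section Reg.
Variables (B V W : normedModType R).

(* D i u is the i-th Frechet
   derivative at u, an element of L^i(B; L(V,W)), written as the
   (i+1)-linear map (h_0,...,h_{i-1}, x) |-> D^i F(u)[h_0,...,h_{i-1}] x.
   Operator norms of such maps are expressed through the usual
   bounds |D i u h x| <= C * prod_m |h m| * |x|. *)
Definition multilin_at (D : nat -> B -> (nat -> B) -> V -> W) (i : nat) (u : B) :=
  [/\ (forall h h' x, (forall m, (m < i)%N -> h m = h' m) -> D i u h x = D i u h' x),
      (forall h, bdd_lin (D i u h)),
      (forall h j x (a : R) (b c : B), (j < i)%N ->
          D i u (upd h j (a *: b + c)) x = a *: D i u (upd h j b) x + D i u (upd h j c) x) &
      (exists C : R, forall h x, `|D i u h x| <= C * hprod i h * `|x|)].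

Definition Ck_alpha (U : set B) (F : B -> V -> W) (k : nat) (alpha : R) : Prop :=
  exists D : nat -> B -> (nat -> B) -> V -> W,
  [/\ (forall u h x, U u -> D 0%N u h x = F u x),
      (forall i u, (i <= k)%N -> U u -> multilin_at D i u),
      (forall i u, (i < k)%N -> U u -> forall eps : R, 0 < eps ->
         exists2 del : R, 0 < del & forall v, `|v| < del -> U (u + v) ->
           forall h x, `|D i (u + v) h x - D i u h x - D i.+1 u (hcons v h) x|
                       <= eps * `|v| * hprod i h * `|x|),
      (forall i, (i <= k)%N -> exists C : R, forall u, U u ->
         forall h x, `|D i u h x| <= C * hprod i h * `|x|) &
      (exists C : R, forall u v, U u -> U v ->
         forall h x, `|D k u h x - D k v h x|
                     <= C * (`|u - v| `^ alpha) * hprod k h * `|x|)].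

Definition C0_op (U : set B) (F : B -> V -> W) : Prop :=
  forall u, U u -> forall eps : R, 0 < eps ->
    exists2 del : R, 0 < del & forall v, U v -> `|v - u| < del ->
      forall x, `|F v x - F u x| <= eps * `|x|.

Definition Ct (t : R) (U : set B) (F : B -> V -> W) : Prop :=
  if t == 0 then C0_op U F
  else exists (k : nat) (alpha : R),
         [/\ 0 < alpha, alpha <= 1, t = k%:R + alpha & Ck_alpha U F k alpha].
End Reg.

Unset Implicit Arguments.
Section Family.
Context {B : normedModType R} {X : R -> normedModType R}.
Variable (j : forall s r : R, X r -> X s).

Definition I0 (r0 s r : R) : Prop := 0 < s /\ s <= r /\ r <= r0.

Definition equivariant (r0 : R) (U : set B)
    (M : forall s r : R, B -> X r -> X s) : Prop :=
  forall s r s' r', I0 r0 s r -> I0 r0 s' r' -> s < s' -> r < r' ->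
    forall u, U u -> forall x : X r',
      j s s' (M s' r' u x) = M s r u (j r r' x).

Definition regular (r0 gamma : R) (U : set B)
    (M : forall s r : R, B -> X r -> X s) : Prop :=
  forall s r, I0 r0 s r -> forall t : R, 0 <= t -> t < Num.min gamma (r - s) ->
    Ct t U (M s r).

Definition equiv_regular (r0 gamma : R) (U : set B)
    (M : forall s r : R, B -> X r -> X s) : Prop :=
  [/\ forall s r, I0 r0 s r -> forall u, U u -> bdd_lin (M s r u),
      equivariant r0 U M & regular r0 gamma U M].
End Family.
End Defs.

(* Main.v *)
Require Import Defs.
From HB Require Import structures.
From mathcomp Require Import all_boot all_order all_algebra.
From mathcomp Require Import all_classical all_reals all_analysis.
From mathcomp Require Import ring lra.
Import Order.TTheory GRing.Theory Num.Theory.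
Import numFieldNormedType.Exports.
Set Implicit Arguments. Unset Strict Implicit. Unset Printing Implicit Defensive.
Local Open Scope classical_set_scope.
Local Open Scope ring_scope.

Section Gen.
Variable R : realType.

Lemma linD (V W : normedModType R) (f : V -> W) :
  (forall (a : R) x y, f (a *: x + y) = a *: f x + f y) ->
  forall x y, f (x + y) = f x + f y.
Proof. by move=> hf x y; rewrite -[x in LHS]scale1r hf scale1r. Qed.

Lemma lin0 (V W : normedModType R) (f : V -> W) :
  (forall (a : R) x y, f (a *: x + y) = a *: f x + f y) -> f 0 = 0.
Proof.
move=> hf; have := linD hf 0 0; rewrite addr0 => /eqP.
by rewrite -subr_eq0 opprD addrA subrr sub0r oppr_eq0 => /eqP.
Qed.

Lemma linZ (V W : normedModType R) (f : V -> W) :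
  (forall (a : R) x y, f (a *: x + y) = a *: f x + f y) ->
  forall (a : R) x, f (a *: x) = a *: f x.
Proof. by move=> hf a x; rewrite -[a *: x]addr0 hf lin0 // addr0. Qed.

Lemma linB (V W : normedModType R) (f : V -> W) :
  (forall (a : R) x y, f (a *: x + y) = a *: f x + f y) ->
  forall x y, f (x - y) = f x - f y.
Proof.
move=> hf x y; rewrite addrC -scaleN1r hf scaleN1r addrC //.
Qed.

Lemma bdd_lin_C (V W : normedModType R) (f : V -> W) :
  bdd_lin f -> exists2 C : R, 0 <= C & forall x, `|f x| <= C * `|x|.
Proof.
case=> _ [C hC]; exists (Num.max C 0); first by rewrite le_max lexx orbT.
move=> x; apply: (le_trans (hC x)); apply: ler_wpM2r => //.
by rewrite le_max lexx.
Qed.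

Lemma small_le0 (x c : R) : 0 <= c -> (forall e, 0 < e -> x <= e * c) -> x <= 0.
Proof.
move=> c0 h; rewrite leNgt; apply/negP => x0.
have c1 : 0 < 2 * (c + 1) by lra.
have := h (x / (2 * (c + 1))) (divr_gt0 x0 c1).
rewrite mulrAC ler_pdivlMr //; nra.
Qed.

Lemma hom_unique (V W : normedModType R) (L1 L2 : V -> W) :
  (forall (a : R) v, L1 (a *: v) = a *: L1 v) ->
  (forall (a : R) v, L2 (a *: v) = a *: L2 v) ->
  (forall e, 0 < e -> exists2 d, 0 < d & forall v, `|v| < d -> `|L1 v - L2 v| <= e * `|v|) ->
  forall v, L1 v = L2 v.
Proof.
move=> h1 h2 h v; apply/eqP; rewrite -subr_eq0 -normr_le0.
apply: (small_le0 (normr_ge0 v)) => e e0.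
have [d d0 hd] := h e e0.
have [->|vn0] := eqVneq v 0.
  by rewrite -(scale0r (0 : V)) h1 h2 !scale0r subrr normr0 normr0 mulr0.
have nv : 0 < `|v| by rewrite normr_gt0.
have [a a0 ha] : exists2 a : R, 0 < a & `|a *: v| < d.
  exists (d / (2 * `|v|)); first by rewrite divr_gt0 // mulr_gt0.
  rewrite normrZ gtr0_norm ?divr_gt0 ?mulr_gt0 //.
  rewrite invfM -!mulrA mulVf ?gt_eqF // mulr1; lra.
move: ha => /hd; rewrite h1 h2 -scalerBr !normrZ !(gtr0_norm a0) mulrCA.
by rewrite ler_pM2l.
Qed.

Lemma addrB2 (V : zmodType) (a b c d : V) : (a + b) - (c + d) = (a - c) + (b - d).
Proof. by rewrite opprD addrACA. Qed.

Lemma addrB3 (V : zmodType) (a b c d e f : V) :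
  (a + b) - (c + d) - (e + f) = (a - c - e) + (b - d - f).
Proof. by rewrite (addrB2 a b c d) addrB2. Qed.

Lemma hol_small (a H : R) : 0 < a -> 0 <= H -> forall eta, 0 < eta ->
  exists2 d : R, 0 < d & forall z, 0 <= z -> z < d -> H * z `^ a <= eta.
Proof.
move=> a0 H0 eta eta0.
have q0 : 0 < eta / (H + 1) by rewrite divr_gt0 // ltr_wpDl.
exists ((eta / (H + 1)) `^ a^-1); first exact: powR_gt0.
move=> z z0 zd.
have : z `^ a <= eta / (H + 1).
  have -> : eta / (H + 1) = ((eta / (H + 1)) `^ a^-1) `^ a.
    by rewrite -powRrM mulVf ?gt_eqF // powRr1 // ltW.
  by apply: ge0_ler_powR; rewrite ?nnegrE ?powR_ge0 // ltW.
move=> hz; apply: le_trans (ler_wpM2l H0 hz) _.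
rewrite mulrA ler_pdivrMr ?ltr_wpDl //; nra.
Qed.

Lemma split3 (V : zmodType) (a b c d e : V) :
  a - c - (d + e) = (a - b - d) + (b - c - e).
Proof. by rewrite addrACA (addrA (a - b)) subrK -opprD. Qed.

Lemma split2 (V : zmodType) (a b c d : V) : a - b - c = (a - b - d) + (d - c).
Proof. by rewrite addrA subrK. Qed.

Lemma subB2 (V : zmodType) (a b c : V) : (a - b) - (a - c) = c - b.
Proof. by rewrite opprB addrC addrA subrK. Qed.

Lemma Cq_le (C e : R) : 0 <= C -> 0 < e -> C * (e / (C + 1)) <= e.
Proof.
move=> C0 e0; rewrite mulrA ler_pdivrMr; last by lra.
nra.
Qed.

Lemma Cq_le3 (C e a b c : R) : 0 <= C -> 0 < e -> 0 <= a -> 0 <= b -> 0 <= c ->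
  C * (e / (C + 1) * a * b * c) <= e * a * b * c.
Proof.
move=> C0 e0 a0 b0 c0.
have -> : C * (e / (C + 1) * a * b * c) = (C * (e / (C + 1))) * (a * b * c) by ring.
have -> : e * a * b * c = e * (a * b * c) by ring.
by apply: ler_wpM2r; [rewrite !mulr_ge0|apply: Cq_le].
Qed.

Lemma decomp (i k : nat) (a b : R) : 0 < a -> a <= 1 -> 0 < b -> b <= 1 ->
  i%:R + a = k%:R + b -> i = k.
Proof.
move=> a0 a1 b0 b1 e; case: (ltngtP i k) => // h.
- have : i%:R + 1 <= k%:R :> R by rewrite natr1 ler_nat.
  clear h => ?; exfalso; lra.
- have : k%:R + 1 <= i%:R :> R by rewrite natr1 ler_nat.
  clear h => ?; exfalso; lra.
Qed.

Lemma min3_pos (g1 g2 : R) : 0 < g1 -> 0 < g2 ->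
  let a := Num.min 1 (Num.min (g1 / 2) (g2 / 2)) in
  [/\ 0 < a, a <= 1, a < g1 & a < g2].
Proof.
move=> h1 h2 a; split.
- by rewrite /a !lt_min ltr01 !divr_gt0.
- by rewrite /a ge_min lexx.
- apply: (le_lt_trans (y := g1 / 2)); first by rewrite /a !ge_min lexx orbT.
  lra.
- apply: (le_lt_trans (y := g2 / 2)); first by rewrite /a !ge_min lexx !orbT.
  lra.
Qed.

Lemma half_le (C e : R) : 0 <= C -> 0 < e -> C * (e / (2 * (C + 1))) <= e / 2.
Proof.
move=> C0 e0; rewrite mulrA ler_pdivrMr; last by lra.
rewrite mulrA [e / 2 * 2]mulrAC -mulrA divff ?mulr1; last by lra.
nra.
Qed.

End Gen.
Section Main.
Unset Implicit Arguments.
Variable R : realType.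
Variables (r0 gamma : R) (X : R -> completeNormedModType R).
Variable j : forall s r : R, X r -> X s.
Variables (E : completeNormedModType R) (U : set E).
Hypothesis hj : forall s r, 0 < s -> s <= r -> r <= r0 ->
     [/\ bdd_lin (j s r), injective (j s r) & dense (range (j s r))].
Hypothesis hjid : forall s, 0 < s -> s <= r0 -> forall x : X s, j s s x = x.
Hypothesis hjcomp : forall s c r, 0 < s -> s <= c -> c <= r -> r <= r0 ->
     forall x : X r, j s c (j c r x) = j s r x.
Hypothesis hU : open U.
Set Implicit Arguments.

Lemma jlin s r : 0 < s -> s <= r -> r <= r0 ->
  forall (a : R) x y, j s r (a *: x + y) = a *: j s r x + j s r y.
Proof. by move=> a b c; case: (hj s r a b c) => [[]]. Qed.

Lemma jbnd s r : 0 < s -> s <= r -> r <= r0 ->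
  exists2 C : R, 0 <= C & forall x, `|j s r x| <= C * `|x|.
Proof. by move=> a b c; case: (hj s r a b c) => /bdd_lin_C. Qed.

Lemma jinj s r : 0 < s -> s <= r -> r <= r0 -> injective (j s r).
Proof. by move=> a b c; case: (hj s r a b c). Qed.

Lemma Uball u : U u -> exists2 d : R, 0 < d & forall v, `|v| < d -> U (u + v).
Proof.
move=> Uu; have : nbhs u U by move: hU; rewrite openE => /(_ u Uu).
rewrite nbhs_ballP => -[d d0 hd].
exists d => // v hv; apply: hd; rewrite -ball_normE /ball_ /=.
by rewrite opprD addrA subrr sub0r normrN.
Qed.

Definition Fam (P : Type) := forall s r : R, E -> P -> X r -> X s.

Record Level0 (P : Type) (w : P -> R) (l g : R) (M : Fam P) : Prop := L0 {
  l0_l : 0 <= l;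
  l0_w : forall p, 0 <= w p;
  l0_lin : forall s r, 0 < s -> r <= r0 -> l < r - s -> forall u, U u ->
     forall p (a : R) x y, M s r u p (a *: x + y) = a *: M s r u p x + M s r u p y;
  l0_E1 : forall s s' r, 0 < s -> s <= s' -> s' <= r -> r <= r0 -> l < r - s' ->
     forall u, U u -> forall p x, j s s' (M s' r u p x) = M s r u p x;
  l0_E2 : forall s r r', 0 < s -> s <= r -> r <= r' -> r' <= r0 -> l < r - s ->
     forall u, U u -> forall p x, M s r u p (j r r' x) = M s r' u p x;
  l0_bnd : forall s r, 0 < s -> r <= r0 -> l < r - s ->
     exists2 C : R, 0 <= C & forall u, U u -> forall p x, `|M s r u p x| <= C * w p * `|x|;
  l0_hol : forall a : R, 0 < a -> a <= 1 -> a < g -> forall s r, 0 < s -> r <= r0 -> l + a < r - s ->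
     exists2 C : R, 0 <= C & forall u v, U u -> U v -> forall p x,
       `|M s r u p x - M s r v p x| <= C * (`|u - v| `^ a) * w p * `|x| }.

Definition Frech (P : Type) (w : P -> R) (M : Fam P) (DM : Fam (P * E)) s r :=
  (forall u, U u -> forall e : R, 0 < e -> exists2 d : R, 0 < d & forall v, `|v| < d -> U (u + v) ->
     forall p x, `|M s r (u + v) p x - M s r u p x - DM s r u (p, v) x| <= e * `|v| * w p * `|x|) /\
  (forall u, U u -> forall p x (a : R) v1 v2,
     DM s r u (p, a *: v1 + v2) x = a *: DM s r u (p, v1) x + DM s r u (p, v2) x).

Definition dw (P : Type) (w : P -> R) : P * E -> R := fun pv => w pv.1 * `|pv.2|.

Fixpoint Good (k : nat) (P : Type) (w : P -> R) (l g : R) (M : Fam P) {struct k} : Prop :=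
  Level0 w l g M /\
  match k with
  | 0 => True
  | k'.+1 => exists DM : Fam (P * E),
      (forall s r, 0 < s -> r <= r0 -> l + 1 < r - s -> Frech w M DM s r) /\
      @Good k' (P * E) (dw w) (l + 1) (g - 1) DM
  end.

Lemma Good_L0 k P (w : P -> R) l g M : Good k w l g M -> Level0 w l g M.
Proof. by case: k => [[]|k []]. Qed.

Lemma L0_weak P (w : P -> R) l g g' M : g' <= g -> Level0 w l g M -> Level0 w l g' M.
Proof.
move=> gg [h1 h2 h3 h4 h5 h6 h7]; split => //.
by move=> a a0 a1 ag; apply: h7 => //; apply: lt_le_trans ag gg.
Qed.

Lemma Good_weak k : forall k' P (w : P -> R) l g g' M, (k' <= k)%N -> g' <= g ->
  Good k w l g M -> Good k' w l g' M.
Proof.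
elim: k => [|k IH] [|k'] P w l g g' M //= kk gg [L D].
- by split => //; apply: L0_weak L.
- by split => //; apply: L0_weak L.
- split; first by apply: L0_weak L.
  case: D => DM [F G]; exists DM; split => //.
  by apply: IH G => //; rewrite lerB.
Qed.

Lemma L0_reindex P P' (w : P -> R) (w' : P' -> R) (f : P' -> P) l g (M : Fam P) :
  (forall p, w (f p) = w' p) -> Level0 w l g M ->
  Level0 w' l g (fun s r u p => M s r u (f p)).
Proof.
move=> hw [h1 h2 h3 h4 h5 h6 h7]; split => //.
- by move=> p; rewrite -hw.
- by move=> s r *; apply: h3.
- by move=> *; apply: h4.
- by move=> *; apply: h5.
- move=> s r a b c; have [C C0 hC] := h6 s r a b c; exists C => // u Uu p x.
  by rewrite -hw hC.
- move=> a a0 a1 ag s r s0 rr sr; have [C C0 hC] := h7 a a0 a1 ag s r s0 rr sr.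
  by exists C => // u v Uu Uv p x; rewrite -hw hC.
Qed.

Lemma Good_reindex k : forall P P' (w : P -> R) (w' : P' -> R) (f : P' -> P) l g (M : Fam P),
  (forall p, w (f p) = w' p) -> Good k w l g M ->
  Good k w' l g (fun s r u p => M s r u (f p)).
Proof.
elim: k => [|k IH] P P' w w' f l g M hw [L D].
  by split => //; apply: L0_reindex L.
split; first by apply: L0_reindex L.
case: D => DM [F G].
exists (fun s r u pv => DM s r u (f pv.1, pv.2)); split.
  move=> s r a b c; have [F1 F2] := F s r a b c; split.
    move=> u Uu e e0; have [d d0 hd] := F1 u Uu e e0; exists d => // v hv Uv p x.
    by rewrite -hw; apply: hd.
  by move=> u Uu p x a' v1 v2; apply: F2.
apply: (IH _ _ _ _ (fun pv : P' * E => (f pv.1, pv.2))) G.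
by move=> [p v]; rewrite /dw /= hw.
Qed.


Definition famD P (A C : Fam P) : Fam P := fun s r u p x => A s r u p x + C s r u p x.
Arguments famD {P} A C _ _ _ _ _.

Lemma L0_add P (w : P -> R) l g (A C : Fam P) :
  Level0 w l g A -> Level0 w l g C -> Level0 w l g (famD A C).
Proof.
move=> LA LC; split; try exact: (l0_l LA); try exact: (l0_w LA).
- move=> s r s0 rr sr u Uu p a x y; rewrite /famD (l0_lin LA) // (l0_lin LC) //.
  by rewrite addrACA scalerDr.
- move=> s s' r s0 ss sr rr lr u Uu p x; rewrite /famD.
  rewrite (linD (jlin _ _ _)) //; last by apply: le_trans rr.
  by rewrite (l0_E1 LA) // (l0_E1 LC).
- move=> s r r' s0 sr rr rr' lr u Uu p x.
  by rewrite /famD (l0_E2 LA) // (l0_E2 LC).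
- move=> s r s0 rr lr; have [C1 C10 h1] := l0_bnd LA s0 rr lr.
  have [C2 C20 h2] := l0_bnd LC s0 rr lr.
  exists (C1 + C2); first exact: addr_ge0.
  move=> u Uu p x; apply: le_trans (ler_normD _ _) _.
  by rewrite !mulrDl; apply: lerD; [apply: h1|apply: h2].
- move=> a a0 a1 ag s r s0 rr lr.
  have [C1 C10 h1] := l0_hol LA a0 a1 ag s0 rr lr.
  have [C2 C20 h2] := l0_hol LC a0 a1 ag s0 rr lr.
  exists (C1 + C2); first exact: addr_ge0.
  move=> u v Uu Uv p x; rewrite /famD addrB2; apply: le_trans (ler_normD _ _) _.
  by rewrite !mulrDl; apply: lerD; [apply: h1|apply: h2].
Qed.

Lemma Frech_add P (w : P -> R) (A C : Fam P) DA DC s r :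
  (forall p, 0 <= w p) ->
  Frech w A DA s r -> Frech w C DC s r -> Frech w (famD A C) (famD DA DC) s r.
Proof.
move=> w0 [F1 L1] [F2 L2]; split.
  move=> u Uu e e0.
  have e20 : 0 < e / 2 by rewrite divr_gt0.
  have [d1 d10 h1] := F1 u Uu _ e20; have [d2 d20 h2] := F2 u Uu _ e20.
  exists (Num.min d1 d2); first by rewrite lt_min d10.
  move=> v; rewrite lt_min => /andP[v1 v2] Uv p x.
  rewrite /famD addrB3; apply: le_trans (ler_normD _ _) _.
  have -> : e * `|v| * w p * `|x| = e / 2 * `|v| * w p * `|x| + e / 2 * `|v| * w p * `|x|.
    by field.
  by apply: lerD; [apply: h1 | apply: h2].
move=> u Uu p x a v1 v2; rewrite /famD L1 // L2 //.
by rewrite addrACA scalerDr.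
Qed.

Lemma Good_add k : forall P (w : P -> R) l g (A C : Fam P),
  Good k w l g A -> Good k w l g C -> Good k w l g (famD A C).
Proof.
elim: k => [|k IH] P w l g A C [LA DA] [LC DC].
  by split => //; apply: L0_add.
split; first by apply: L0_add.
case: DA => DA [FA GA]; case: DC => DC [FC GC].
exists (famD DA DC); split; last exact: IH.
by move=> s r s0 rr lr; apply: Frech_add; [exact: (l0_w LA)|apply: FA|apply: FC].
Qed.

Lemma L0_cont P (w : P -> R) l g (M : Fam P) : Level0 w l g M -> 0 < g ->
  forall s r, 0 < s -> r <= r0 -> l < r - s -> forall u, U u -> forall eta : R, 0 < eta ->
  exists2 d : R, 0 < d & forall v, U v -> `|u - v| < d ->
    forall p x, `|M s r u p x - M s r v p x| <= eta * w p * `|x|.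
Proof.
move=> LM g0 s r s0 rr lr u Uu eta eta0.
pose a := Num.min 1 (Num.min (g / 2) ((r - s - l) / 2)).
have a0 : 0 < a by rewrite !lt_min ltr01 !divr_gt0 //; lra.
have a1 : a <= 1 by rewrite ge_min lexx.
have ag : a < g.
  apply: (le_lt_trans (y := g / 2)); first by rewrite /a !ge_min lexx orbT.
  lra.
have al : l + a < r - s.
  have : a <= (r - s - l) / 2 by rewrite /a !ge_min lexx !orbT.
  lra.
have [H H0 hH] := l0_hol LM a0 a1 ag s0 rr al.
have [d d0 hd] := hol_small a0 H0 eta0.
exists d => // v Uv uv p x; apply: le_trans (hH u v Uu Uv p x) _.
rewrite -(mulrA (H * _)) -(mulrA eta); apply: ler_wpM2r.
  by apply: mulr_ge0; [exact: (l0_w LM)|].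
by apply: hd.
Qed.


Definition spl (la lc s r : R) := s + la + (r - s - la - lc) / 2.

Definition famM PA PC (la lc : R) (A : Fam PA) (C : Fam PC) : Fam (PA * PC) :=
  fun s r u p x => A s (spl la lc s r) u p.1 (C (spl la lc s r) r u p.2 x).
Arguments famM {PA PC} la lc A C _ _ _ _ _.

Lemma indep_le2 PA PC (wA : PA -> R) (wC : PC -> R) la lc ga gc (A : Fam PA) (C : Fam PC)
  s r c1 c2 u u' pa pc x :
  Level0 wA la ga A -> Level0 wC lc gc C -> 0 < s -> r <= r0 ->
  la < c1 - s -> lc < r - c2 -> c1 <= c2 -> U u -> U u' ->
  A s c1 u pa (C c1 r u' pc x) = A s c2 u pa (C c2 r u' pc x).
Proof.
move=> LA LC s0 rr h1 h2 c12 Uu Uu'.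
have la0 := l0_l LA; have lc0 := l0_l LC.
have c0 : 0 < c1 by lra.
have c2r : c2 <= r by lra.
have c20 : c2 <= r0 by lra.
have sc : s <= c1 by lra.
rewrite -(l0_E1 LC c0 c12 c2r rr h2 Uu' pc x).
by rewrite (l0_E2 LA s0 sc c12 c20 h1 Uu).
Qed.

Lemma indep2 PA PC (wA : PA -> R) (wC : PC -> R) la lc ga gc (A : Fam PA) (C : Fam PC)
  s r c1 c2 u u' pa pc x :
  Level0 wA la ga A -> Level0 wC lc gc C -> 0 < s -> r <= r0 ->
  la < c1 - s -> lc < r - c1 -> la < c2 - s -> lc < r - c2 -> U u -> U u' ->
  A s c1 u pa (C c1 r u' pc x) = A s c2 u pa (C c2 r u' pc x).
Proof.
move=> LA LC s0 rr a1 b1 a2 b2 Uu Uu'.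
case: (leP c1 c2) => c12.
  exact: (indep_le2 pa pc x LA LC s0 rr a1 b2 c12 Uu Uu').
by symmetry; apply: (indep_le2 pa pc x LA LC s0 rr a2 b1 (ltW c12) Uu Uu').
Qed.

Lemma indep PA PC (wA : PA -> R) (wC : PC -> R) la lc ga gc (A : Fam PA) (C : Fam PC)
  s r c1 c2 u pa pc x :
  Level0 wA la ga A -> Level0 wC lc gc C -> 0 < s -> r <= r0 ->
  la < c1 - s -> lc < r - c1 -> la < c2 - s -> lc < r - c2 -> U u ->
  A s c1 u pa (C c1 r u pc x) = A s c2 u pa (C c2 r u pc x).
Proof.
move=> LA LC s0 rr a1 b1 a2 b2 Uu.
exact: (indep2 pa pc x LA LC s0 rr a1 b1 a2 b2 Uu Uu).
Qed.

Lemma spl_ok la lc s r : la + lc < r - s ->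
  la < spl la lc s r - s /\ lc < r - spl la lc s r.
Proof. by rewrite /spl => h; split; lra. Qed.

Lemma L0_mul PA PC (wA : PA -> R) (wC : PC -> R) la lc g (A : Fam PA) (C : Fam PC) :
  Level0 wA la g A -> Level0 wC lc g C ->
  Level0 (fun p => wA p.1 * wC p.2) (la + lc) g (famM la lc A C).
Proof.
move=> LA LC; have la0 := l0_l LA; have lc0 := l0_l LC.
split.
- exact: addr_ge0.
- by move=> p; apply: mulr_ge0; [apply: (l0_w LA)|apply: (l0_w LC)].
- move=> s r s0 rr lr u Uu p a x y; rewrite /famM.
  have [h1 h2] := spl_ok lr.
  have c0 : 0 < spl la lc s r by lra.
  have cr : spl la lc s r <= r0 by lra.
  by rewrite (l0_lin LC c0 rr h2 Uu) (l0_lin LA s0 cr h1 Uu).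
- move=> s s' r s0 ss sr rr lr u Uu p x; rewrite /famM.
  have [h1 h2] := spl_ok lr.
  have c0 : spl la lc s' r <= r0 by lra.
  have c1 : s' <= spl la lc s' r by lra.
  rewrite (l0_E1 LA s0 ss c1 c0 h1 Uu).
  have lr' : la + lc < r - s by lra.
  have [k1 k2] := spl_ok lr'.
  apply: (indep p.1 p.2 x LA LC) => //; lra.
- move=> s r r' s0 sr rr rr' lr u Uu p x; rewrite /famM.
  have [h1 h2] := spl_ok lr.
  have c0 : 0 < spl la lc s r by lra.
  have c1 : spl la lc s r <= r by lra.
  rewrite (l0_E2 LC c0 c1 rr rr' h2 Uu).
  have lr' : la + lc < r' - s by lra.
  have [k1 k2] := spl_ok lr'.
  apply: (indep p.1 p.2 x LA LC) => //; lra.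
- move=> s r s0 rr lr; have [h1 h2] := spl_ok lr.
  set c := spl la lc s r.
  have c0 : 0 < c by rewrite /c; lra.
  have cr : c <= r0 by rewrite /c; lra.
  have [C1 C10 hC1] := l0_bnd LA s0 cr h1.
  have [C2 C20 hC2] := l0_bnd LC c0 rr h2.
  exists (C1 * C2); first exact: mulr_ge0.
  move=> u Uu [pa pc] x; rewrite /famM /= -/c.
  apply: le_trans (hC1 _ Uu _ _) _.
  apply: le_trans (ler_wpM2l _ (hC2 _ Uu pc x)) _.
    by apply: mulr_ge0 => //; apply: (l0_w LA).
  by rewrite le_eqVlt; apply/orP; left; apply/eqP; ring.
- move=> a a0 a1 ag s r s0 rr lr.
  have wA0 := l0_w LA; have wC0 := l0_w LC.
  set e := r - s - la - lc - a.
  have e0 : 0 < e by rewrite /e; lra.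
  have lr' : la + lc < r - s by lra.
  have [h1 h2] := spl_ok lr'.
  set c := spl la lc s r in h1 h2 *.
  pose c1 := s + la + a + e / 2; pose c2 := s + la + e / 2.
  have c1r : c1 <= r0 by rewrite /c1 /e; lra.
  have c1a : la + a < c1 - s by rewrite /c1; lra.
  have c10 : 0 < c1 by rewrite /c1; lra.
  have c1b : lc < r - c1 by rewrite /c1 /e; lra.
  have c2r : c2 <= r0 by rewrite /c2 /e; lra.
  have c2a : la < c2 - s by rewrite /c2; lra.
  have c20 : 0 < c2 by rewrite /c2; lra.
  have c2b : lc + a < r - c2 by rewrite /c2 /e; lra.
  have c1a' : la < c1 - s by lra.
  have c2b' : lc < r - c2 by lra.
  have [HA HA0 hA] := l0_hol LA a0 a1 ag s0 c1r c1a.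
  have [CC CC0 hCC] := l0_bnd LC c10 rr c1b.
  have [CA CA0 hCA] := l0_bnd LA s0 c2r c2a.
  have [HC HC0 hC] := l0_hol LC a0 a1 ag c20 rr c2b.
  exists (HA * CC + CA * HC); first by apply: addr_ge0; apply: mulr_ge0.
  move=> u v Uu Uv [pa pc] x; rewrite /famM /= -/c.
  rewrite (indep pa pc x LA LC s0 rr h1 h2 c1a' c1b Uu).
  rewrite (indep pa pc x LA LC s0 rr h1 h2 c2a c2b' Uv).
  have mid := indep2 pa pc x LA LC s0 rr c1a' c1b c2a c2b' Uv Uu.
  set P := A s c1 u pa _; set Q := A s c2 v pa _.
  have -> : P - Q = (P - A s c1 v pa (C c1 r u pc x)) +
                    (A s c2 v pa (C c2 r u pc x) - Q) by rewrite mid addrA subrK.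
  apply: le_trans (ler_normD _ _) _.
  set z := `|u - v| `^ a.
  have z0 : 0 <= z by apply: powR_ge0.
  have hX : `|P - A s c1 v pa (C c1 r u pc x)| <= HA * z * wA pa * (CC * wC pc * `|x|).
    apply: le_trans (hA u v Uu Uv pa _) _.
    apply: ler_wpM2l; last exact: hCC.
    by apply: mulr_ge0 => //; apply: mulr_ge0.
  have hY : `|A s c2 v pa (C c2 r u pc x) - Q| <= CA * wA pa * (HC * z * wC pc * `|x|).
    rewrite /Q -(linB (l0_lin LA s0 c2r c2a Uv pa)).
    apply: le_trans (hCA v Uv pa _) _.
    apply: ler_wpM2l; last exact: hC.
    by apply: mulr_ge0.
  apply: le_trans (lerD hX hY) _.
  by rewrite le_eqVlt; apply/orP; left; apply/eqP; rewrite /=; ring.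
Qed.


Definition famDer PA PC la lc (A : Fam PA) (C : Fam PC) (DA : Fam (PA * E)) (DC : Fam (PC * E)) :
  Fam ((PA * PC) * E) :=
  famD (fun s r u (pv : (PA * PC) * E) => famM (la + 1) lc DA C s r u ((pv.1.1, pv.2), pv.1.2))
       (fun s r u (pv : (PA * PC) * E) => famM la (lc + 1) A DC s r u (pv.1.1, (pv.1.2, pv.2))).
Arguments famDer {PA PC} la lc A C DA DC _ _ _ _ _.

Lemma Frech_mul PA PC (wA : PA -> R) (wC : PC -> R) la lc g gDA (A : Fam PA) (C : Fam PC)
  (DA : Fam (PA * E)) (DC : Fam (PC * E)) s r :
  Level0 wA la g A -> Level0 wC lc g C -> Level0 (dw wA) (la + 1) gDA DA -> 0 < g ->
  0 < s -> r <= r0 -> la + lc + 1 < r - s ->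
  Frech wA A DA s (spl (la + 1) lc s r) -> Frech wC C DC (spl la (lc + 1) s r) r ->
  Frech (fun p => wA p.1 * wC p.2) (famM la lc A C) (famDer la lc A C DA DC) s r.
Proof.
move=> LA LC LDA g0 s0 rr lr [FA LinA] [FC LinC].
have la0 := l0_l LA; have lc0 := l0_l LC.
have wA0 := l0_w LA; have wC0 := l0_w LC.
have lr0 : la + lc < r - s by lra.
have [h1 h2] := spl_ok lr0.
have lr1 : la + 1 + lc < r - s by lra.
have [k1 k2] := spl_ok lr1.
have lr2 : la + (lc + 1) < r - s by lra.
have [m1 m2] := spl_ok lr2.
set c := spl la lc s r in h1 h2 *.
set c1 := spl (la + 1) lc s r in k1 k2 FA LinA *.
set c2 := spl la (lc + 1) s r in m1 m2 FC LinC *.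
have c10 : 0 < c1 by lra.
have c1r : c1 <= r0 by lra.
have c20 : 0 < c2 by lra.
have c2r : c2 <= r0 by lra.
have k1' : la < c1 - s by lra.
have m2' : lc < r - c2 by lra.
have [CC CC0 hCC] := l0_bnd LC c10 rr k2.
have [CA CA0 hCA] := l0_bnd LA s0 c2r m1.
have [CD CD0 hCD] := l0_bnd LDA s0 c1r k1.
split; last first.
  move=> u Uu [pa pc] x a v1 v2; rewrite /famDer /famD /famM /= -/c1 -/c2.
  rewrite LinA // LinC // (l0_lin LA s0 c2r m1 Uu).
  by rewrite addrACA scalerDr.
move=> u Uu e e0.
pose e1 := e / (2 * (CC + CA + 1)).
have e10 : 0 < e1 by rewrite divr_gt0 //; lra.
pose eta := e / (2 * (CD + 1)).
have eta0 : 0 < eta by rewrite divr_gt0 //; lra.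
have [d1 d10 hd1] := FA u Uu e1 e10.
have [d2 d20 hd2] := FC u Uu e1 e10.
have [d3 d30 hd3] := L0_cont LC g0 c10 rr k2 Uu eta0.
exists (Num.min d1 (Num.min d2 d3)); first by rewrite !lt_min d10 d20 d30.
move=> v; rewrite !lt_min => /and3P[v1 v2 v3] Uv [pa pc] x.
rewrite /famDer /famD /famM /= -/c -/c1 -/c2.
rewrite (indep pa pc x LA LC s0 rr h1 h2 k1' k2 Uv).
rewrite (indep pa pc x LA LC s0 rr h1 h2 m1 m2' Uu).
rewrite (split3 _ (A s c1 u pa (C c1 r (u + v) pc x))).
set y := C c1 r (u + v) pc x; set y0 := C c1 r u pc x.
rewrite (split2 _ _ _ (DA s c1 u (pa, v) y)).
apply: le_trans (ler_normD _ _) _.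
apply: le_trans (lerD (ler_normD _ _) (lexx _)) _.
have hy : `|y| <= CC * wC pc * `|x| by apply: hCC.
have T1 : `|A s c1 (u + v) pa y - A s c1 u pa y - DA s c1 u (pa, v) y| <=
          e1 * `|v| * wA pa * (CC * wC pc * `|x|).
  apply: le_trans (hd1 v v1 Uv pa y) _.
  apply: ler_wpM2l => //; apply: mulr_ge0 => //; apply: mulr_ge0 => //; exact: ltW.
have T2 : `|DA s c1 u (pa, v) y - DA s c1 u (pa, v) y0| <=
          CD * (wA pa * `|v|) * (eta * wC pc * `|x|).
  rewrite -(linB (l0_lin LDA s0 c1r k1 Uu (pa, v))).
  apply: le_trans (hCD u Uu (pa, v) _) _.
  apply: ler_wpM2l; first by apply: mulr_ge0 => //; apply: mulr_ge0.
  rewrite distrC; apply: hd3 => //.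
  by rewrite opprD addrA subrr sub0r normrN.
have T3 : `|A s c1 u pa y - A s c2 u pa (C c2 r u pc x) -
            A s c2 u pa (DC c2 r u (pc, v) x)| <= CA * wA pa * (e1 * `|v| * wC pc * `|x|).
  rewrite /y (indep2 pa pc x LA LC s0 rr k1' k2 m1 m2' Uu Uv).
  rewrite -!(linB (l0_lin LA s0 c2r m1 Uu pa)).
  apply: le_trans (hCA u Uu pa _) _.
  apply: ler_wpM2l; first exact: mulr_ge0.
  exact: hd2.
apply: le_trans (lerD (lerD T1 T2) T3) _.
have hK : e1 * CC + CD * eta + CA * e1 <= e.
  have -> : e1 * CC + CD * eta + CA * e1 = e * ((CC + CA) / (2 * (CC + CA + 1)) + CD / (2 * (CD + 1))).
    by rewrite /e1 /eta; field; apply/andP; split; lra.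
  rewrite -[X in _ <= X]mulr1 ler_pM2l //.
  have q1 : (CC + CA) / (2 * (CC + CA + 1)) <= 1 / 2.
    by rewrite ler_pdivrMr ?mulr_gt0 //; lra.
  have q2 : CD / (2 * (CD + 1)) <= 1 / 2.
    by rewrite ler_pdivrMr ?mulr_gt0 //; lra.
  lra.
have W0 : 0 <= `|v| * (wA pa * wC pc) * `|x| by rewrite !mulr_ge0.
apply: le_trans (_ : (e1 * CC + CD * eta + CA * e1) * (`|v| * (wA pa * wC pc) * `|x|) <= _).
  by rewrite le_eqVlt; apply/orP; left; apply/eqP; ring.
rewrite [X in _ <= X](_ : _ = e * (`|v| * (wA pa * wC pc) * `|x|)); last by rewrite /=; ring.
exact: ler_wpM2r.
Qed.


Lemma Good_mul k : forall PA PC (wA : PA -> R) (wC : PC -> R) la lc g (A : Fam PA) (C : Fam PC),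
  k%:R < g -> Good k wA la g A -> Good k wC lc g C ->
  Good k (fun p => wA p.1 * wC p.2) (la + lc) g (famM la lc A C).
Proof.
elim: k => [|k IH] PA PC wA wC la lc g A C kg GA GC.
  by split => //; apply: L0_mul; apply: Good_L0; [exact: GA|exact: GC].
have gg : g - 1 <= g by lra.
have GA' := Good_weak (k' := k) (g' := g - 1) (leqnSn k) gg GA.
have GC' := Good_weak (k' := k) (g' := g - 1) (leqnSn k) gg GC.
case: GA => LA [DA [FA GDA]]; case: GC => LC [DC [FC GDC]].
have kg' : k%:R < g - 1 by move: kg; rewrite -natr1; lra.
have g0 : 0 < g by move: kg; rewrite -natr1; have := ler0n R k; lra.
have la0 := l0_l LA; have lc0 := l0_l LC.
split; first exact: L0_mul.
exists (famDer la lc A C DA DC); split.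
  move=> s r s0 rr lr.
  have lr1 : la + 1 + lc < r - s by lra.
  have [k1 k2] := spl_ok lr1.
  have lr2 : la + (lc + 1) < r - s by lra.
  have [m1 m2] := spl_ok lr2.
  apply: (Frech_mul LA LC (Good_L0 GDA) g0 s0 rr lr).
    apply: FA => //; lra.
  apply: FC => //; lra.
have G1 := IH _ _ _ _ _ _ _ _ _ kg' GDA GC'.
have G2 := IH _ _ _ _ _ _ _ _ _ kg' GA' GDC.
have G1' := Good_reindex (f := fun pv : (PA * PC) * E => ((pv.1.1, pv.2), pv.1.2))
   (w' := dw (fun p : PA * PC => wA p.1 * wC p.2)) _ G1.
have G2' := Good_reindex (f := fun pv : (PA * PC) * E => (pv.1.1, (pv.1.2, pv.2)))
   (w' := dw (fun p : PA * PC => wA p.1 * wC p.2)) _ G2.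
rewrite (_ : la + 1 + lc = la + lc + 1) in G1'; last by ring.
rewrite (_ : la + (lc + 1) = la + lc + 1) in G2'; last by ring.
apply: Good_add.
  apply: G1' => -[[pa pc] v]; rewrite /dw /=; ring.
apply: G2' => -[[pa pc] v]; rewrite /dw /=; ring.
Qed.


Section Chains.
Variables (V W : normedModType R).

Definition Ckw (F : E -> V -> W) (k : nat) (alpha : R) (D : nat -> E -> (nat -> E) -> V -> W) : Prop :=
  [/\ (forall u h x, U u -> D 0%N u h x = F u x),
      (forall i u, (i <= k)%N -> U u -> multilin_at D i u),
      (forall i u, (i < k)%N -> U u -> forall eps : R, 0 < eps ->
         exists2 del : R, 0 < del & forall v, `|v| < del -> U (u + v) ->
           forall h x, `|D i (u + v) h x - D i u h x - D i.+1 u (hcons v h) x|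
                       <= eps * `|v| * hprod i h * `|x|),
      (forall i, (i <= k)%N -> exists C : R, forall u, U u ->
         forall h x, `|D i u h x| <= C * hprod i h * `|x|) &
      (exists C : R, forall u v, U u -> U v ->
         forall h x, `|D k u h x - D k v h x|
                     <= C * (`|u - v| `^ alpha) * hprod k h * `|x|)].

Lemma Ck_alphaE F k alpha : Ck_alpha U F k alpha <-> exists D, Ckw F k alpha D.
Proof. by []. Qed.

Definition ChainW (D : nat -> E -> (nat -> E) -> V -> W) (n : nat) : Prop :=
  (forall i, (i < n)%N -> forall u, U u -> forall e : R, 0 < e -> exists2 d : R, 0 < d &
     forall v, `|v| < d -> U (u + v) -> forall h x,
       `|D i (u + v) h x - D i u h x - D i.+1 u (hcons v h) x| <= e * `|v| * hprod i h * `|x|) /\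
  (forall i, (0 < i <= n)%N -> forall u, U u -> forall h x (a : R) v,
     D i u (hcons (a *: v) h) x = a *: D i u (hcons v h) x).

Lemma upd_hcons (h : nat -> E) v b : upd (hcons v h) 0 b = hcons b h.
Proof. by apply/funext => -[|m]. Qed.

Lemma hcons_eta (h : nat -> E) : h = hcons (h 0%N) (fun m => h m.+1).
Proof. by apply/funext => -[|m]. Qed.

Lemma hprod_ge0 i (h : nat -> E) : 0 <= hprod i h.
Proof. by apply: prodr_ge0 => m _. Qed.

Lemma hprodS i (h : nat -> E) v : hprod i.+1 (hcons v h) = `|v| * hprod i h.
Proof. by rewrite /hprod big_ord_recl. Qed.

Lemma mlin_slot0 (D : nat -> E -> (nat -> E) -> V -> W) i u :
  (0 < i)%N -> multilin_at D i u ->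
  forall h x (a : R) v1 v2, D i u (hcons (a *: v1 + v2) h) x =
     a *: D i u (hcons v1 h) x + D i u (hcons v2 h) x.
Proof.
move=> i0 [_ _ hl _] h x a v1 v2.
by have := hl (hcons v1 h) 0%N x a v1 v2 i0; rewrite !upd_hcons.
Qed.

Lemma mlin_hom (D : nat -> E -> (nat -> E) -> V -> W) i u :
  (0 < i)%N -> multilin_at D i u ->
  forall h x (a : R) v, D i u (hcons (a *: v) h) x = a *: D i u (hcons v h) x.
Proof.
move=> i0 hm h x a v.
have z : D i u (hcons 0 h) x = 0.
  have := mlin_slot0 i0 hm h x 1 0 0.
  rewrite scaler0 addr0 scale1r => /eqP; rewrite -subr_eq0 opprD addrA subrr sub0r oppr_eq0.
  by move/eqP.
by rewrite -[a *: v]addr0 mlin_slot0 // z addr0.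
Qed.

Lemma Ckw_chain F k a D : Ckw F k a D -> ChainW D k.
Proof.
case=> _ hm hf _ _; split; first by move=> i ik u Uu; apply: hf.
move=> i /andP[i0 ik] u Uu h x b v.
exact: (mlin_hom i0 (hm i u ik Uu)).
Qed.

Lemma frech_uniq (Y : normedModType R) (F1 F2 L1 L2 : E -> Y) (K : R) u :
  U u -> 0 <= K ->
  (forall (a : R) v, L1 (a *: v) = a *: L1 v) ->
  (forall (a : R) v, L2 (a *: v) = a *: L2 v) ->
  (forall u', U u' -> F1 u' = F2 u') ->
  (forall e : R, 0 < e -> exists2 d : R, 0 < d & forall v, `|v| < d -> U (u + v) ->
     `|F1 (u + v) - F1 u - L1 v| <= e * `|v| * K) ->
  (forall e : R, 0 < e -> exists2 d : R, 0 < d & forall v, `|v| < d -> U (u + v) ->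
     `|F2 (u + v) - F2 u - L2 v| <= e * `|v| * K) ->
  forall v, L1 v = L2 v.
Proof.
move=> Uu K0 h1 h2 hF f1 f2; apply: hom_unique => // e e0.
have e'0 : 0 < e / (2 * (K + 1)) by rewrite divr_gt0 //; lra.
have [d1 d10 hd1] := f1 _ e'0; have [d2 d20 hd2] := f2 _ e'0.
have [d3 d30 hd3] := Uball Uu.
exists (Num.min d1 (Num.min d2 d3)); first by rewrite !lt_min d10 d20 d30.
move=> v; rewrite !lt_min => /and3P[v1 v2 v3].
have Uv := hd3 v v3.
have -> : L1 v - L2 v = (F2 (u + v) - F2 u - L2 v) - (F1 (u + v) - F1 u - L1 v).
  by rewrite !hF // subB2.
apply: le_trans (ler_normB _ _) _.
apply: le_trans (lerD (hd2 v v2 Uv) (hd1 v v1 Uv)) _.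
have nv := normr_ge0 v.
have -> : e / (2 * (K + 1)) * `|v| * K + e / (2 * (K + 1)) * `|v| * K
   = e * `|v| * (K / (K + 1)) by field; lra.
rewrite -[X in _ <= X]mulr1; apply: ler_wpM2l; first by rewrite mulr_ge0 //; lra.
by rewrite ler_pdivrMr; lra.
Qed.

Lemma chain_unique (D D' : nat -> E -> (nat -> E) -> V -> W) n n' :
  ChainW D n -> ChainW D' n' ->
  (forall u h x, U u -> D 0%N u h x = D' 0%N u h x) ->
  forall i, (i <= n)%N -> (i <= n')%N -> forall u h x, U u -> D i u h x = D' i u h x.
Proof.
move=> [F1 H1] [F2 H2] h0; elim=> [|i IH] // i1 i2 u h x Uu.
rewrite (hcons_eta h); set th := fun m => h m.+1.
have ii1 : (i < n)%N by []. have ii2 : (i < n')%N by [].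
apply: (@frech_uniq W (fun u' => D i u' th x) (fun u' => D' i u' th x)
   (fun v => D i.+1 u (hcons v th) x) (fun v => D' i.+1 u (hcons v th) x)
   (hprod i th * `|x|) u) => //.
- by apply: mulr_ge0; [exact: hprod_ge0|].
- by move=> a v; apply: H1.
- by move=> a v; apply: H2.
- by move=> u' Uu'; apply: IH => //; apply: ltnW.
- move=> e e0; have [d d0 hd] := F1 i ii1 u Uu e e0; exists d => // v hv Uv.
  by rewrite mulrA; apply: hd.
- move=> e e0; have [d d0 hd] := F2 i ii2 u Uu e e0; exists d => // v hv Uv.
  by rewrite mulrA; apply: hd.
Qed.

End Chains.


Lemma chain_compL (V W W' : normedModType R) (D : nat -> E -> (nat -> E) -> V -> W) n
  (f : W -> W') : ChainW D n -> bdd_lin f -> ChainW (fun i u h x => f (D i u h x)) n.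
Proof.
move=> [F H] fl; have [C C0 hC] := bdd_lin_C fl; have lf := fl.1.
split.
  move=> i ilt u Uu e e0.
  have e'0 : 0 < e / (C + 1) by rewrite divr_gt0 //; lra.
  have [d d0 hd] := F i ilt u Uu _ e'0; exists d => // v hv Uv h x.
  rewrite -!(linB lf); apply: le_trans (hC _) _.
  apply: le_trans (ler_wpM2l C0 (hd v hv Uv h x)) _.
  by apply: Cq_le3 => //; apply: hprod_ge0.
by move=> i i0 u Uu h x a v; rewrite H // (linZ lf).
Qed.

Lemma chain_compR (V' V W : normedModType R) (D : nat -> E -> (nat -> E) -> V -> W) n
  (g : V' -> V) : ChainW D n -> bdd_lin g -> ChainW (fun i u h x => D i u h (g x)) n.
Proof.
move=> [F H] gl; have [C C0 hC] := bdd_lin_C gl.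
split; last by move=> i i0 u Uu h x a v; rewrite H.
move=> i ilt u Uu e e0.
have e'0 : 0 < e / (C + 1) by rewrite divr_gt0 //; lra.
have [d d0 hd] := F i ilt u Uu _ e'0; exists d => // v hv Uv h x.
apply: le_trans (hd v hv Uv h (g x)) _.
have -> : e / (C + 1) * `|v| * hprod i h * `|g x| = `|g x| * (e / (C + 1) * `|v| * hprod i h * 1) by ring.
apply: le_trans (ler_wpM2r _ (hC x)) _.
  by rewrite !mulr_ge0 ?hprod_ge0 ?invr_ge0 //; lra.
have -> : C * `|x| * (e / (C + 1) * `|v| * hprod i h * 1) = C * (e / (C + 1) * `|v| * hprod i h * `|x|) by ring.
by apply: Cq_le3 => //; apply: hprod_ge0.
Qed.


Section Extract.
Variables (s r : R).

Definition mlin (Dd : E -> (nat -> E) -> X r -> X s) (m : nat) (u : E) :=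
  [/\ (forall h h' x, (forall mm, (mm < m)%N -> h mm = h' mm) -> Dd u h x = Dd u h' x),
      (forall h, bdd_lin (Dd u h)),
      (forall h jj x (a : R) (b c : E), (jj < m)%N ->
          Dd u (upd h jj (a *: b + c)) x = a *: Dd u (upd h jj b) x + Dd u (upd h jj c) x) &
      (exists C : R, forall h x, `|Dd u h x| <= C * hprod m h * `|x|)].

Definition GCk (n : nat) (D : nat -> E -> (nat -> E) -> X r -> X s) (k : nat) (a : R) :=
  [/\ (forall i u, (i <= k)%N -> U u -> mlin (D i) (n + i) u),
      (forall i u, (i < k)%N -> U u -> forall eps : R, 0 < eps ->
         exists2 del : R, 0 < del & forall v, `|v| < del -> U (u + v) ->
           forall h x, `|D i (u + v) h x - D i u h x - D i.+1 u (hcons v h) x|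
                       <= eps * `|v| * hprod (n + i) h * `|x|),
      (forall i, (i <= k)%N -> exists C : R, forall u, U u ->
         forall h x, `|D i u h x| <= C * hprod (n + i) h * `|x|) &
      (exists C : R, forall u v, U u -> U v ->
         forall h x, `|D k u h x - D k v h x|
                     <= C * (`|u - v| `^ a) * hprod (n + k) h * `|x|)].

Lemma hprod_tail n (h : nat -> E) : hprod n.+1 h = `|h 0%N| * hprod n (fun m => h m.+1).
Proof. by rewrite /hprod big_ord_recl. Qed.

Lemma tail_upd0 (h : nat -> E) w : (fun m => upd h 0 w m.+1) = (fun m => h m.+1).
Proof. by []. Qed.

Lemma tail_updS (h : nat -> E) jj w : (fun m => upd h jj.+1 w m.+1) = upd (fun m => h m.+1) jj w.
Proof. by apply/funext => m; rewrite /upd eqSS. Qed.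

Lemma deriv_lin P (w : P -> R) (M : Fam P) (DM : Fam (P * E)) u (p0 p1 p2 : P) (b : R) x :
  U u -> (forall p, 0 <= w p) -> Frech w M DM s r ->
  (forall u', U u' -> M s r u' p0 x = b *: M s r u' p1 x + M s r u' p2 x) ->
  forall v, DM s r u (p0, v) x = b *: DM s r u (p1, v) x + DM s r u (p2, v) x.
Proof.
move=> Uu w0 [FF LL] hM.
have K0 : 0 <= (w p0 + `|b| * w p1 + w p2) * `|x|.
  by rewrite mulr_ge0 // !addr_ge0 // mulr_ge0.
apply: (frech_uniq (F1 := fun u' => M s r u' p0 x)
  (F2 := fun u' => b *: M s r u' p1 x + M s r u' p2 x) Uu K0).
- exact: (linZ (LL u Uu p0 x)).
- move=> a v; rewrite (linZ (LL u Uu p1 x)) (linZ (LL u Uu p2 x)).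
  by rewrite scalerDr !scalerA mulrC.
- exact: hM.
- move=> e e0; have [d d0 hd] := FF u Uu e e0; exists d => // v hv Uv.
  apply: le_trans (hd v hv Uv p0 x) _.
  have -> : e * `|v| * w p0 * `|x| = e * `|v| * (w p0 * `|x|) by ring.
  apply: ler_wpM2l; first by rewrite mulr_ge0 // ltW.
  apply: ler_wpM2r => //.
  have := w0 p2; have : 0 <= `|b| * w p1 by rewrite mulr_ge0.
  lra.
- move=> e e0; have [d d0 hd] := FF u Uu e e0; exists d => // v hv Uv.
  rewrite addrB3 -!scalerBr; apply: le_trans (ler_normD _ _) _.
  rewrite normrZ.
  apply: le_trans (lerD (ler_wpM2l (normr_ge0 b) (hd v hv Uv p1 x)) (hd v hv Uv p2 x)) _.
  have -> : `|b| * (e * `|v| * w p1 * `|x|) + e * `|v| * w p2 * `|x| =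
     e * `|v| * ((`|b| * w p1 + w p2) * `|x|) by ring.
  apply: ler_wpM2l; first by rewrite mulr_ge0 // ltW.
  apply: ler_wpM2r => //.
  have := w0 p0; lra.
Qed.

Lemma extract k : forall P (w : P -> R) l g (M : Fam P) (n : nat) (enc : (nat -> E) -> P) (a : R),
  Good k w l g M -> 0 < s -> r <= r0 -> l + k%:R + a < r - s -> 0 < a -> a <= 1 -> k%:R + a < g ->
  (forall h, w (enc h) = hprod n h) ->
  (forall h h', (forall m, (m < n)%N -> h m = h' m) -> enc h = enc h') ->
  (forall u, U u -> forall h jj x (b : R) (v1 v2 : E), (jj < n)%N ->
     M s r u (enc (upd h jj (b *: v1 + v2))) x =
     b *: M s r u (enc (upd h jj v1)) x + M s r u (enc (upd h jj v2)) x) ->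
  exists D : nat -> E -> (nat -> E) -> X r -> X s,
    GCk n D k a /\ (forall u h x, U u -> D 0%N u h x = M s r u (enc h) x).
Proof.
have base : forall P (w : P -> R) l g (M : Fam P) (n : nat) (enc : (nat -> E) -> P),
  Level0 w l g M -> 0 < s -> r <= r0 -> l < r - s ->
  (forall h, w (enc h) = hprod n h) ->
  (forall h h', (forall m, (m < n)%N -> h m = h' m) -> enc h = enc h') ->
  (forall u, U u -> forall h jj x (b : R) (v1 v2 : E), (jj < n)%N ->
     M s r u (enc (upd h jj (b *: v1 + v2))) x =
     b *: M s r u (enc (upd h jj v1)) x + M s r u (enc (upd h jj v2)) x) ->
  forall u, U u -> mlin (fun u h x => M s r u (enc h) x) n u.
  move=> P w l g M n enc L s0 rr lr hw hd hm u Uu.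
  have [C C0 hC] := l0_bnd L s0 rr lr.
  split.
  - by move=> h h' x hh; rewrite (hd h h').
  - move=> h; split; first by move=> b x y; apply: (l0_lin L).
    by exists (C * w (enc h)) => x; apply: hC.
  - by move=> h jj x b v1 v2 jn; apply: hm.
  - by exists C => h x; rewrite -hw; apply: hC.
elim: k => [|k IH] P w l g M n enc a G s0 rr lr a0 a1 ag hw hd hm.
  have L := Good_L0 G.
  have lr' : l < r - s by lra.
  exists (fun _ u h x => M s r u (enc h) x); split => //.
  have ag' : a < g by lra.
  have lr'' : l + a < r - s by lra.
  split.
  - move=> i u; rewrite leqn0 => /eqP -> Uu; rewrite addn0.
    exact: (base _ _ _ _ _ _ _ L s0 rr lr' hw hd hm u Uu).
  - by [].
  - move=> i; rewrite leqn0 => /eqP ->; rewrite addn0.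
    have [C C0 hC] := l0_bnd L s0 rr lr'.
    by exists C => u Uu h x; rewrite -hw; apply: hC.
  - have [C C0 hC] := l0_hol L a0 a1 ag' s0 rr lr''.
    by exists C => u v Uu Uv h x; rewrite addn0 -hw; apply: hC.
case: G => L [DM [F G']].
have k0 : 0 <= k%:R :> R by [].
rewrite -natr1 in lr ag.
have lr1 : l + 1 < r - s by lra.
have lr' : l < r - s by lra.
have [Ffr Flin] := F s r s0 rr lr1.
have w0 := l0_w L.
pose enc' := fun h : nat -> E => (enc (fun m => h m.+1), h 0%N).
have hw' : forall h, dw w (enc' h) = hprod n.+1 h.
  by move=> h; rewrite /dw /enc' /= hw hprod_tail mulrC.
have hd' : forall h h', (forall m, (m < n.+1)%N -> h m = h' m) -> enc' h = enc' h'.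
  move=> h h' hh; rewrite /enc' (hh 0%N) // (hd (fun m => h m.+1) (fun m => h' m.+1)) //.
  by move=> m mn; apply: hh.
have hm' : forall u, U u -> forall h jj x (b : R) (v1 v2 : E), (jj < n.+1)%N ->
     DM s r u (enc' (upd h jj (b *: v1 + v2))) x =
     b *: DM s r u (enc' (upd h jj v1)) x + DM s r u (enc' (upd h jj v2)) x.
  move=> u Uu h [|jj] x b v1 v2 jn; rewrite /enc' /=.
    by apply: Flin.
  rewrite !tail_updS.
  apply: (deriv_lin (w := w) (M := M) Uu w0 (F s r s0 rr lr1)).
  by move=> u' Uu'; apply: hm.
have lrI : l + 1 + k%:R + a < r - s by lra.
have agI : k%:R + a < g - 1 by lra.
have [D' [[m1 f1 b1 h1] D'0]] := IH _ _ _ _ _ _ _ _ G' s0 rr lrI a0 a1 agI hw' hd' hm'.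
exists (fun i => if i is i'.+1 then D' i' else fun u h x => M s r u (enc h) x).
split => //; split.
- move=> [|i] u ik Uu.
    by rewrite addn0; exact: (base _ _ _ _ _ _ _ L s0 rr lr' hw hd hm u Uu).
  by rewrite addnS -addSn; apply: m1.
- move=> [|i] u ik Uu e e0.
    have [d d0 hd0] := Ffr u Uu e e0; exists d => // v hv Uv h x.
    rewrite D'0 // addn0 -hw.
    exact: hd0 v hv Uv (enc h) x.
  by rewrite addnS -addSn; apply: f1.
- move=> [|i] ik.
    have [C C0 hC] := l0_bnd L s0 rr lr'.
    by exists C => u Uu h x; rewrite addn0 -hw; apply: hC.
  by rewrite addnS -addSn; apply: b1.
- by rewrite addnS -addSn.
Qed.

End Extract.

Fixpoint iterP (i : nat) : Type := if i is i'.+1 then (iterP i' * E)%type else unit.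
Fixpoint iterW (i : nat) : iterP i -> R :=
  match i return iterP i -> R with
  | 0 => fun _ => 1
  | i'.+1 => fun p => @iterW i' p.1 * `|p.2|
  end.
Arguments iterW i p : clear implicits.
Fixpoint dec (i : nat) : iterP i -> nat -> E :=
  match i return iterP i -> nat -> E with
  | 0 => fun _ _ => 0
  | i'.+1 => fun p => hcons p.2 (@dec i' p.1)
  end.
Arguments dec i p _ : clear implicits.

Lemma iterW_hprod i p : iterW i p = hprod i (dec i p).
Proof.
elim: i p => [|i IH] p /=; first by rewrite /hprod big_ord0.
by rewrite hprodS IH mulrC.
Qed.

Lemma iterW_ge0 i p : 0 <= iterW i p.
Proof. by rewrite iterW_hprod hprod_ge0. Qed.

Section QSec.
Unset Implicit Arguments.
Variable Q : forall s r : R, E -> X r -> X s.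
Hypothesis hQ : equiv_regular R j r0 gamma U Q.
Hypothesis hg0 : 0 < gamma.
Set Implicit Arguments.

Lemma QL s r u : 0 < s -> s <= r -> r <= r0 -> U u -> bdd_lin (Q s r u).
Proof. by move=> a b c Uu; case: hQ => h _ _; apply: h. Qed.

Lemma QE1 s s' r u x : 0 < s -> s <= s' -> s' < r -> r <= r0 -> U u ->
  j s s' (Q s' r u x) = Q s r u x.
Proof.
move=> s0 ss sr rr Uu; case: hQ => _ he _.
have [<-|ss'] := eqVneq s s'; first by rewrite hjid //; lra.
have lt : s < s' by rewrite lt_neqAle ss' ss.
have s20 : 0 < s / 2 by rewrite divr_gt0.
have a1 : s / 2 <= s by lra.
have a2 : s <= r0 by lra.
have a3 : s' <= r0 by lra.
apply: (jinj s20 a1 a2).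
rewrite (hjcomp (s / 2) s s' s20 a1 ss a3).
have I1 : I0 R r0 (s / 2) s by split; [lra|split; lra].
have I2 : I0 R r0 s' r by split; [lra|split; lra].
have I3 : I0 R r0 s r by split; [lra|split; lra].
have b1 : s / 2 < s' by lra.
have b2 : s / 2 < s by lra.
have sr' : s < r by lra.
by rewrite (he _ _ _ _ I1 I2 b1 sr' u Uu) (he _ _ _ _ I1 I3 b2 sr' u Uu).
Qed.


Lemma QE2 s r r' u x : 0 < s -> s <= r -> r <= r' -> r' <= r0 -> U u ->
  Q s r u (j r r' x) = Q s r' u x.
Proof.
move=> s0 sr rr rr0 Uu; case: hQ => _ he _.
have [e|rr'] := eqVneq r r'; first by subst r'; rewrite hjid //; lra.
have lt : r < r' by rewrite lt_neqAle rr' rr.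
have s20 : 0 < s / 2 by rewrite divr_gt0.
have a1 : s / 2 <= s by lra.
have a2 : s <= r0 by lra.
apply: (jinj s20 a1 a2).
have I1 : I0 R r0 (s / 2) (s / 2) by split; [lra|split; lra].
have I2 : I0 R r0 s r by split; [lra|split; lra].
have I3 : I0 R r0 s r' by split; [lra|split; lra].
have b1 : s / 2 < s by lra.
have b2 : s / 2 < r by lra.
have b3 : s / 2 < r' by lra.
rewrite (he _ _ _ _ I1 I2 b1 b2 u Uu) (he _ _ _ _ I1 I3 b1 b3 u Uu).
by rewrite (hjcomp (s / 2) r r') //; lra.
Qed.

Definition QWit i s r (D : nat -> E -> (nat -> E) -> X r -> X s) :=
  exists a : R, [/\ 0 < a, a <= 1 & Ckw (Q s r) i a D].
Arguments QWit i s r D : clear implicits.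

Definition QD i s r : nat -> E -> (nat -> E) -> X r -> X s :=
  match pselect (exists D, QWit i s r D) with
  | left H => projT1 (cid H)
  | right _ => fun _ _ _ _ => 0
  end.
Arguments QD i s r _ _ _ _ : clear implicits.

Lemma QD_spec i s r : (exists D, QWit i s r D) -> QWit i s r (QD i s r).
Proof. by rewrite /QD; case: pselect => // H _; exact: (projT2 (cid H)). Qed.

Lemma QWit_ex i s r (a : R) : 0 < s -> r <= r0 -> 0 < a -> a <= 1 ->
  i%:R + a < r - s -> i%:R + a < gamma -> exists D, Ckw (Q s r) i a D.
Proof.
move=> s0 rr a0 a1 h1 h2; case: hQ => _ _ hr.
have i0 : 0 <= i%:R :> R by [].
have I : I0 R r0 s r by split; [lra|split; lra].
have t0 : 0 <= i%:R + a by lra.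
have := hr s r I (i%:R + a) t0; rewrite lt_min h1 h2 => /(_ isT).
rewrite /Ct ifF; last by apply/negbTE; rewrite gt_eqF //; lra.
case=> k [b [b0 b1 e]]; have ik := decomp a0 a1 b0 b1 e.
move: e; rewrite ik => /addrI <-.
by rewrite Ck_alphaE.
Qed.

Lemma QD_ok i s r : 0 < s -> r <= r0 -> i%:R < r - s -> i%:R < gamma ->
  QWit i s r (QD i s r).
Proof.
move=> s0 rr h1 h2; apply: QD_spec.
have g1 : 0 < gamma - i%:R by lra.
have g2 : 0 < r - s - i%:R by lra.
have [a0 a1 ag ar] := min3_pos g1 g2.
set a := Num.min _ _ in a0 a1 ag ar.
have q1 : i%:R + a < r - s by lra.
have q2 : i%:R + a < gamma by lra.
have [D hD] := QWit_ex s0 rr a0 a1 q1 q2.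
by exists D, a.
Qed.

Lemma QWit_chain i s r D : QWit i s r D -> ChainW D i.
Proof. by case=> a [_ _ h]; apply: Ckw_chain h. Qed.

Lemma QWit_eq i i' s r D D' : QWit i s r D -> QWit i' s r D' ->
  forall m, (m <= i)%N -> (m <= i')%N -> forall u h x, U u -> D m u h x = D' m u h x.
Proof.
move=> W1 W2; apply: chain_unique (QWit_chain W1) (QWit_chain W2) _.
move: W1 W2 => [a [_ _ [h1 _ _ _ _]]] [b [_ _ [h2 _ _ _ _]]] u h x Uu.
by rewrite h1 // h2.
Qed.


Definition TQ i : Fam (iterP i) := fun s r u p x => QD i s r i u (dec i p) x.
Arguments TQ i s r u p x : clear implicits.

Lemma L0_TQ i : i%:R < gamma -> Level0 (iterW i) i%:R (gamma - i%:R) (TQ i).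
Proof.
move=> hi; split.
- exact: ler0n.
- exact: iterW_ge0.
- move=> s r s0 rr lr u Uu p a x y.
  have [b [_ _ [_ hm _ _ _]]] := QD_ok s0 rr lr hi.
  have [_ bl _ _] := hm i u (leqnn i) Uu.
  exact: (bl (dec i p)).1.
- move=> s s' r s0 ss sr rr lr u Uu p x.
  have s'0 : 0 < s' by lra.
  have s'r : s' <= r0 by lra.
  have W1 := QD_ok s'0 rr lr hi.
  have lr' : i%:R < r - s by lra.
  have W2 := QD_ok s0 rr lr' hi.
  have [jb _ _] := hj s s' s0 ss s'r.
  have C1 := chain_compL (QWit_chain W1) jb.
  move: (W1) (W2) => [a1 [_ _ [c1 _ _ _ _]]] [a2 [_ _ [c2 _ _ _ _]]].
  have h0 : forall u' h x', U u' -> j s s' (QD i s' r 0 u' h x') = QD i s r 0 u' h x'.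
    move=> u' h x' Uu'; rewrite c1 // c2 // QE1 //.
    have i0 : 0 <= i%:R :> R by [].
    lra.
  by apply: (chain_unique C1 (QWit_chain W2) h0).
- move=> s r r' s0 sr rr rr' lr u Uu p x.
  have rr0 : r <= r0 by lra.
  have r0' : 0 < r by lra.
  have W1 := QD_ok s0 rr0 lr hi.
  have lr' : i%:R < r' - s by lra.
  have W2 := QD_ok s0 rr' lr' hi.
  have [jb _ _] := hj r r' r0' rr rr'.
  have C1 := chain_compR (QWit_chain W1) jb.
  move: (W1) (W2) => [a1 [_ _ [c1 _ _ _ _]]] [a2 [_ _ [c2 _ _ _ _]]].
  have h0 : forall u' h x', U u' -> QD i s r 0 u' h (j r r' x') = QD i s r' 0 u' h x'.
    move=> u' h x' Uu'.
    have i0 : 0 <= i%:R :> R by [].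
    have sr' : s <= r by lra.
    by rewrite c1 // c2 //; apply: QE2.
  by apply: (chain_unique C1 (QWit_chain W2) h0).
- move=> s r s0 rr lr.
  have [b [_ _ [_ _ _ hb _]]] := QD_ok s0 rr lr hi.
  have [C hC] := hb i (leqnn i).
  exists (Num.max C 0); first by rewrite le_max lexx orbT.
  move=> u Uu p x; rewrite /TQ iterW_hprod.
  apply: le_trans (hC u Uu _ x) _.
  rewrite -!mulrA; apply: ler_wpM2r; first by rewrite mulr_ge0 // hprod_ge0.
  by rewrite le_max lexx.
- move=> a a0 a1 ag s r s0 rr lr.
  have i0 : 0 <= i%:R :> R by [].
  have q2 : i%:R + a < gamma by lra.
  have [D hD] := QWit_ex s0 rr a0 a1 lr q2.
  have W' : QWit i s r D by exists a.
  have lr' : i%:R < r - s by lra.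
  have W := QD_ok s0 rr lr' hi.
  move: (hD) => [_ _ _ _ [C hC]].
  exists (Num.max C 0); first by rewrite le_max lexx orbT.
  move=> u v Uu Uv p x; rewrite /TQ iterW_hprod.
  rewrite (QWit_eq W W' (leqnn i) (leqnn i) _ _ Uu) (QWit_eq W W' (leqnn i) (leqnn i) _ _ Uv).
  apply: le_trans (hC u v Uu Uv _ x) _.
  rewrite -!mulrA; apply: ler_wpM2r.
    by rewrite !mulr_ge0 ?hprod_ge0 ?powR_ge0.
  by rewrite le_max lexx.
Qed.

Lemma Frech_TQ i : (i.+1)%:R < gamma -> forall s r, 0 < s -> r <= r0 -> i%:R + 1 < r - s ->
  Frech (iterW i) (TQ i) (TQ i.+1) s r.
Proof.
move=> hi s r s0 rr lr.
have lr1 : (i.+1)%:R < r - s by rewrite -natr1.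
have lr0 : i%:R < r - s by lra.
have hi0 : i%:R < gamma by move: hi; rewrite -natr1; lra.
have W1 := QD_ok s0 rr lr1 hi.
have W0 := QD_ok s0 rr lr0 hi0.
move: (W1) => [b [_ _ [_ hm hf _ _]]].
split.
  move=> u Uu e e0; have [d d0 hd] := hf i u (ltnSn i) Uu e e0.
  exists d => // v hv Uv p x; rewrite /TQ /= iterW_hprod.
  rewrite (QWit_eq W0 W1 (leqnn i) (leqnSn i) _ _ Uv) (QWit_eq W0 W1 (leqnn i) (leqnSn i) _ _ Uu).
  exact: hd.
move=> u Uu p x a v1 v2; rewrite /TQ /=.
exact: (mlin_slot0 (ltn0Sn i) (hm i.+1 u (leqnn _) Uu)).
Qed.

Lemma Good_TQ k : forall i, (i + k)%:R < gamma ->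
  Good k (iterW i) i%:R (gamma - i%:R) (TQ i).
Proof.
elim: k => [|k IH] i hik.
  by split => //; apply: L0_TQ; rewrite addn0 in hik.
have hi : i%:R < gamma.
  have h : i%:R <= (i + k.+1)%:R :> R by rewrite ler_nat leq_addr.
  exact: le_lt_trans h hik.
have hi1 : (i.+1)%:R < gamma.
  have h : (i.+1)%:R <= (i + k.+1)%:R :> R by rewrite ler_nat addnS ltnS leq_addr.
  exact: le_lt_trans h hik.
split; first exact: L0_TQ.
exists (TQ i.+1); split.
  by move=> s r s0 rr lr; apply: Frech_TQ.
have hk : ((i.+1) + k)%:R < gamma by rewrite addSnnS.
have := IH i.+1 hk.
rewrite -natr1 (_ : gamma - (i%:R + 1) = gamma - i%:R - 1); last by ring.
by [].
Qed.

Lemma TQ0 s r u x : 0 < s -> r <= r0 -> 0 < r - s -> U u -> TQ 0 s r u tt x = Q s r u x.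
Proof.
move=> s0 rr lr Uu.
have [b [_ _ [c0 _ _ _ _]]] := QD_ok (i := 0) s0 rr lr hg0.
by rewrite /TQ c0.
Qed.


Section RSec.
Unset Implicit Arguments.
Variable Rinv : forall s : R, E -> X s -> X s.
Hypothesis hRinv : forall s, 0 < s -> s <= r0 -> forall u, U u ->
     [/\ bdd_lin (Rinv s u),
         (forall x : X s, Rinv s u (x - Q s s u x) = x) &
         (forall x : X s, Rinv s u x - Q s s u (Rinv s u x) = x)].
Hypothesis hRb : forall eps : R, 0 < eps -> exists C : R,
     forall s, eps < s -> s <= r0 -> forall u, U u ->
       forall x : X s, `|Rinv s u x| <= C * `|x|.
Set Implicit Arguments.

Definition RF : Fam unit := fun s r u _ x => j s r (Rinv r u x).
Arguments RF s r u _ x : clear implicits.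

Lemma Rlin s u : 0 < s -> s <= r0 -> U u ->
  forall (a : R) x y, Rinv s u (a *: x + y) = a *: Rinv s u x + Rinv s u y.
Proof. by move=> s0 sr Uu; case: (hRinv _ s0 sr _ Uu) => -[]. Qed.

Lemma Rcomm r r' u x : 0 < r -> r < r' -> r' <= r0 -> U u ->
  Rinv r u (j r r' x) = j r r' (Rinv r' u x).
Proof.
move=> r0' rr rr0 Uu; case: hQ => _ he _.
have r'0 : 0 < r' by lra.
have rr0' : r <= r0 by lra.
case: (hRinv _ r'0 rr0 _ Uu) => _ _ hr.
set y := Rinv r' u x.
have hx : x = y - Q r' r' u y by rewrite hr.
have I1 : I0 R r0 r r by split; [lra|split; lra].
have I2 : I0 R r0 r' r' by split; [lra|split; lra].
rewrite {1}hx (linB (jlin _ _ _)) //; last by lra.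
rewrite (he _ _ _ _ I1 I2 rr rr u Uu).
by case: (hRinv _ r0' rr0' _ Uu) => _ hl _; rewrite hl.
Qed.

Lemma Rbnd s r : 0 < s -> s <= r -> r <= r0 ->
  exists2 C : R, 0 <= C & forall u, U u -> forall x, `|RF s r u tt x| <= C * `|x|.
Proof.
move=> s0 sr rr.
have [Cj Cj0 hCj] := jbnd s0 sr rr.
have r20 : 0 < r / 2 by lra.
have [CR hCR] := hRb _ r20.
exists (Cj * Num.max CR 0); first by rewrite mulr_ge0 // le_max lexx orbT.
move=> u Uu x; rewrite /RF.
apply: le_trans (hCj _) _.
rewrite -mulrA; apply: ler_wpM2l => //.
apply: le_trans (hCR r _ rr u Uu x) _; first by lra.
by apply: ler_wpM2r => //; rewrite le_max lexx.
Qed.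

Lemma Rid s c c' r u v x : 0 < s -> s < c -> c < c' -> c' < r -> r <= r0 -> U u -> U v ->
  RF s r u tt x - RF s r v tt x =
  RF s c u tt (Q c c' u (RF c' r v tt x) - Q c c' v (RF c' r v tt x)).
Proof.
move=> s0 sc cc cr rr Uu Uv.
have sr : s < r by lra.
have s0' : s <= r0 by lra.
rewrite /RF -!(@Rcomm s r _ _ s0 sr rr) //.
set z := j s r x.
case: (hRinv _ s0 s0' _ Uv) => _ _ hrv.
case: (hRinv _ s0 s0' _ Uu) => _ hlu _.
set w := Rinv s v z.
have hz : z = (w - Q s s u w) + (Q s s u w - Q s s v w).
  by rewrite addrA subrK /w hrv.
rewrite {1}hz (linD (Rlin s0 s0' Uu)) hlu addrC addKr.
have hw : w = j s r (Rinv r v x) by rewrite /w /z (@Rcomm s r _ _ s0 sr rr).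
set y0 := Rinv r v x.
have sr' : s <= r by lra.
rewrite hw (@QE2 s s r u y0 s0 (lexx s) sr' rr Uu) (@QE2 s s r v y0 s0 (lexx s) sr' rr Uv).
have c0 : 0 < c by lra.
have cr' : c < r by lra.
rewrite -(@QE1 s c r u y0 s0 (ltW sc) cr' rr Uu).
rewrite -(@QE1 s c r v y0 s0 (ltW sc) cr' rr Uv).
rewrite -(@QE2 c c' r u y0 c0 (ltW cc) (ltW cr) rr Uu).
rewrite -(@QE2 c c' r v y0 c0 (ltW cc) (ltW cr) rr Uv).
have s0'' : s <= c by lra.
have c0' : c <= r0 by lra.
rewrite -(linB (jlin s0 s0'' c0')).
by rewrite (@Rcomm s c _ _ s0 sc) //; lra.
Qed.


Lemma L0_RF : Level0 (fun _ : unit => 1) 0 gamma RF.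
Proof.
split => //.
- move=> s r s0 rr lr u Uu p a x y; rewrite /RF.
  have r0' : 0 < r by lra.
  rewrite (Rlin r0' rr Uu) (jlin s0 _ rr) //; lra.
- move=> s s' r s0 ss sr rr lr u Uu p x; rewrite /RF.
  by rewrite hjcomp.
- move=> s r r' s0 sr rr rr' lr u Uu p x; rewrite /RF.
  have [e|rne] := eqVneq r r'; first by subst r'; rewrite hjid //; lra.
  have lt : r < r' by rewrite lt_neqAle rne rr.
  have r0' : 0 < r by lra.
  rewrite (@Rcomm r r' u x r0' lt rr' Uu) hjcomp //.
- move=> s r s0 rr lr.
  have sr : s <= r by lra.
  have [C C0 hC] := Rbnd s0 sr rr.
  by exists C => // u Uu p x; rewrite mulr1; case: p; apply: hC.
- move=> a a0 a1 ag s r s0 rr lr.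
  set e := r - s - a.
  have e0 : 0 < e by rewrite /e; lra.
  pose c := s + e / 3; pose c' := c + a + e / 3.
  have sc : s < c by rewrite /c; lra.
  have cc : c < c' by rewrite /c' /c; lra.
  have cr : c' < r by rewrite /c' /c /e; lra.
  have g0 : (0%N)%:R < gamma by lra.
  have LQ := L0_TQ g0.
  have ag' : a < gamma - (0%N)%:R by rewrite subr0.
  have c0 : 0 < c by lra.
  have c'r : c' <= r0 by lra.
  have gap : (0%N)%:R + a < c' - c by rewrite add0r /c'; lra.
  have [H H0 hH] := l0_hol LQ a0 a1 ag' c0 c'r gap.
  have sc' : s <= c by lra.
  have cr0 : c <= r0 by lra.
  have [C1 C10 hC1] := Rbnd s0 sc' cr0.
  have c'0 : 0 < c' by lra.
  have [C2 C20 hC2] := Rbnd c'0 (ltW cr) rr.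
  exists (C1 * H * C2); first by rewrite !mulr_ge0.
  move=> u v Uu Uv p x; case: p; rewrite /= (Rid x s0 sc cc cr rr Uu Uv).
  set y := RF c' r v tt x.
  apply: le_trans (hC1 u Uu _) _.
  have gap0 : 0 < c' - c by lra.
  rewrite -(@TQ0 c c' u y c0 c'r gap0 Uu) -(@TQ0 c c' v y c0 c'r gap0 Uv).
  have := hH u v Uu Uv tt y; rewrite /= mulr1 => hy.
  apply: le_trans (ler_wpM2l C10 hy) _.
  have := hC2 v Uv x; rewrite -/y => hy2.
  have z0 : 0 <= `|u - v| `^ a by apply: powR_ge0.
  apply: le_trans (ler_wpM2l _ (ler_wpM2l _ hy2)) _.
  - by rewrite ?mulr_ge0.
  - by rewrite ?mulr_ge0.
  by rewrite le_eqVlt; apply/orP; left; apply/eqP; ring.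
Qed.


Definition DRF : Fam (unit * E) := fun s r u pv =>
  famM (0 + 1) 0 (famM 0 1 RF (TQ 1)) RF s r u ((tt, (tt, pv.2)), tt).

Lemma Frech_RF s r : 1 < gamma -> 0 < s -> r <= r0 -> 0 + 1 < r - s ->
  Frech (fun _ : unit => 1) RF DRF s r.
Proof.
move=> g1 s0 rr lr.
have lr' : 0 + 1 + 0 < r - s by lra.
have [h1 h2] := spl_ok lr'.
set c := spl (0 + 1) 0 s r in h1 h2 *.
have lc : 0 + 1 < c - s by lra.
have [k1 k2] := spl_ok lc.
set ci := spl 0 1 s c in k1 k2 *.
have ci0 : 0 < ci by lra.
have cr0 : c <= r0 by lra.
have gQ : (0%N.+1)%:R < gamma by [].
have kq : (0%N)%:R + 1 < c - ci by rewrite add0r.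
have [FT LT] := Frech_TQ gQ ci0 cr0 kq.
have gQ1 : (1%N)%:R < gamma by [].
have L1 := L0_TQ gQ1.
have kq1 : (1%N)%:R < c - ci by [].
have [CD CD0 hCD] := l0_bnd L1 ci0 cr0 kq1.
have sci : s <= ci by lra.
have cir0 : ci <= r0 by lra.
have [C1 C10 hC1] := Rbnd s0 sci cir0.
have c0 : 0 < c by lra.
have cr' : c <= r by lra.
have [C2 C20 hC2] := Rbnd c0 cr' rr.
have sci' : s < ci by lra.
have cic : ci < c by lra.
have cr : c < r by lra.
have gap0 : 0 < c - ci by lra.
have k0 : 0 < ci - s by lra.
split; last first.
  move=> u Uu [] x a v1 v2; rewrite /DRF /famM /= -/c -/ci.
  rewrite LT //.
  rewrite (l0_lin L0_RF s0 cir0 k0 Uu) //.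
move=> u Uu e e0.
pose e1 := e / (2 * (C1 * C2 + 1)).
have e10 : 0 < e1 by rewrite divr_gt0 //; nra.
pose eta := e / (2 * (CD * C2 + 1)).
have eta0 : 0 < eta by rewrite divr_gt0 //; nra.
have [d1 d10 hd1] := FT u Uu e1 e10.
have g0 : 0 < gamma by lra.
have [d2 d20 hd2] := L0_cont L0_RF g0 s0 cir0 k0 Uu eta0.
exists (Num.min d1 d2); first by rewrite lt_min d10 d20.
move=> v; rewrite lt_min => /andP[v1 v2] Uv [] x.
rewrite (Rid x s0 sci' cic cr rr Uv Uu).
rewrite /DRF /famM /= -/c -/ci.
set y := RF c r u tt x.
rewrite -(@TQ0 ci c (u + v) y ci0 cr0 gap0 Uv) -(@TQ0 ci c u y ci0 cr0 gap0 Uu).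
set Dv := TQ 1 ci c u (tt, v) y.
set q := TQ 0 ci c (u + v) tt y - TQ 0 ci c u tt y.
have -> : RF s ci (u + v) tt q - RF s ci u tt Dv =
   (RF s ci (u + v) tt q - RF s ci (u + v) tt Dv) + (RF s ci (u + v) tt Dv - RF s ci u tt Dv).
  by rewrite addrA subrK.
rewrite -(linB (l0_lin L0_RF s0 cir0 k0 Uv tt)).
apply: le_trans (ler_normD _ _) _.
have hy : `|y| <= C2 * `|x| by apply: hC2.
have T1 : `|RF s ci (u + v) tt (q - Dv)| <= C1 * (e1 * `|v| * (C2 * `|x|)).
  apply: le_trans (hC1 _ Uv _) _; apply: ler_wpM2l => //.
  have := hd1 v v1 Uv tt y; rewrite /= mulr1 => h.
  apply: le_trans h _; apply: ler_wpM2l => //.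
  by rewrite mulr_ge0 // ltW.
have hDv : `|Dv| <= CD * `|v| * (C2 * `|x|).
  have := hCD u Uu (tt, v) y; rewrite /= mul1r => h.
  apply: le_trans h _; apply: ler_wpM2l => //.
  by rewrite mulr_ge0.
have T2 : `|RF s ci (u + v) tt Dv - RF s ci u tt Dv| <= eta * (CD * `|v| * (C2 * `|x|)).
  rewrite distrC; have := hd2 (u + v) Uv _ tt Dv.
  rewrite mulr1 => h; apply: le_trans (h _) _.
    by rewrite opprD addrA subrr sub0r normrN.
  by apply: ler_wpM2l => //; apply: ltW.
apply: le_trans (lerD T1 T2) _.
have P0 : 0 <= `|v| * `|x| by rewrite mulr_ge0.
have -> : C1 * (e1 * `|v| * (C2 * `|x|)) + eta * (CD * `|v| * (C2 * `|x|)) =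
   ((C1 * C2) * e1 + (CD * C2) * eta) * (`|v| * `|x|) by ring.
have -> : e * `|v| * 1 * `|x| = e * (`|v| * `|x|) by ring.
apply: ler_wpM2r => //.
have C12 : 0 <= C1 * C2 by rewrite mulr_ge0.
have CD2 : 0 <= CD * C2 by rewrite mulr_ge0.
have H1 := half_le C12 e0.
have H2 := half_le CD2 e0.
rewrite /e1 /eta; lra.
Qed.

Lemma Good_RF k : k%:R < gamma -> Good k (fun _ : unit => 1) 0 gamma RF.
Proof.
elim: k => [|k IH] hk; first by split => //; exact: L0_RF.
have hk' : k%:R < gamma by move: hk; rewrite -natr1; lra.
have g1 : 1 < gamma by move: hk; rewrite -natr1; have := ler0n R k; lra.
split; first exact: L0_RF.
exists DRF; split.
  by move=> s r s0 rr lr; apply: Frech_RF.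
have gg : gamma - 1 <= gamma by lra.
have GR := Good_weak (k' := k) (g' := gamma - 1) (leqnn k) gg (IH hk').
have h1k : (1 + k)%:R < gamma by rewrite add1n.
have GQ : Good k (iterW 1) 1 (gamma - 1) (TQ 1) := Good_TQ h1k.
have kg : k%:R < gamma - 1 by move: hk; rewrite -natr1; lra.
have P1 := Good_mul kg GR GQ.
have P2 := Good_mul kg P1 GR.
have P3 := Good_reindex (f := fun pv : unit * E => ((tt, (tt, pv.2)), tt))
   (w' := dw (fun _ : unit => 1)) _ P2.
rewrite addr0 in P3; apply: P3.
by move=> [[] v]; rewrite /dw /= !mul1r mulr1.
Qed.


Lemma main_result : equiv_regular R j r0 gamma U (fun s r u x => j s r (Rinv r u x)).
Proof.
split.
- move=> s r [s0 [sr rr]] u Uu; split.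
    have r0' : 0 < r by lra.
    by move=> a x y; rewrite (Rlin r0' rr Uu) (jlin s0 sr rr).
  by have [C _ hC] := Rbnd s0 sr rr; exists C => x; apply: hC.
- move=> s r s' r' [s0 [sr rr]] [s'0 [s'r' r'r0]] ss rr' u Uu x.
  have r0' : 0 < r by lra.
  rewrite (@Rcomm r r' u x r0' rr' r'r0 Uu).
  rewrite hjcomp //; last by lra.
  rewrite hjcomp //; lra.
- move=> s r [s0 [sr rr]] t t0; rewrite lt_min => /andP[tg trs].
  have gap : 0 < r - s by lra.
  have [->|tn0] := eqVneq t 0.
    rewrite /Ct eqxx => u Uu eps eps0.
    have [d d0 hd] := L0_cont L0_RF hg0 s0 rr gap Uu eps0.
    exists d => // v Uv hv x; rewrite distrC.
    have := hd v Uv (_ : `|u - v| < d) tt x; rewrite mulr1; apply.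
    by rewrite distrC.
  rewrite /Ct (negbTE tn0).
  have [k [al [al0 al1 tk]]] : exists k : nat, exists al : R, [/\ 0 < al, al <= 1 & t = k%:R + al].
    have /andP[tl tu] := truncn_itv t0.
    set n := Num.Def.trunc t in tl tu.
    have [e|ne] := eqVneq (n%:R) t.
      case: n e tl tu => [|n'] e tl tu.
        by move: tn0; rewrite -e eqxx.
      by exists n', 1; split => //; rewrite -e -natr1.
    exists n, (t - n%:R); split.
    - by rewrite subr_gt0 lt_neqAle ne tl.
    - by move: tu; rewrite -natr1; lra.
    - by rewrite addrC subrK.
  exists k, al; split => //.
  have kg : k%:R < gamma by lra.
  have G := Good_RF kg.
  have lrk : 0 + k%:R + al < r - s by lra.
  have agk : k%:R + al < gamma by lra.
  have hw : forall h : nat -> E, (fun _ : unit => (1 : R)) ((fun _ => tt) h) = hprod 0 h.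
    by move=> h; rewrite /hprod big_ord0.
  have [D [[m1 f1 b1 h1] D0]] := @extract s r k unit (fun _ => 1) 0 gamma RF 0 (fun _ => tt) al
     G s0 rr lrk al0 al1 agk hw (fun _ _ _ => erefl) (fun u _ h jj x b v1 v2 jn => False_ind _ (notF jn)).
  exists D; split.
  - by move=> u h x Uu; rewrite D0.
  - by move=> i u ik Uu; apply: m1.
  - by move=> i u ik Uu; apply: f1.
  - by move=> i ik; apply: b1.
  - by [].
Qed.

End RSec.
End QSec.

End Main.

Theorem lemmaD6 (R : realType) (r0 gamma : R)
  (X : R -> completeNormedModType R)
  (j : forall s r : R, X r -> X s)
  (B : completeNormedModType R) (U : set B)
  (Q : forall s r : R, B -> X r -> X s)
  (Rinv : forall s : R, B -> X s -> X s) :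
  0 < r0 -> 0 < gamma -> gamma <= r0 ->
  (forall s r, 0 < s -> s <= r -> r <= r0 ->
     [/\ bdd_lin (j s r), injective (j s r) & dense (range (j s r))]) ->
  (forall s, 0 < s -> s <= r0 -> forall x : X s, j s s x = x) ->
  (forall s c r, 0 < s -> s <= c -> c <= r -> r <= r0 ->
     forall x : X r, j s c (j c r x) = j s r x) ->
  U !=set0 -> open U -> convex_set U ->
  equiv_regular R j r0 gamma U Q ->
  (forall s, 0 < s -> s <= r0 -> forall u, U u ->
     [/\ bdd_lin (Rinv s u),
         (forall x : X s, Rinv s u (x - Q s s u x) = x) &
         (forall x : X s, Rinv s u x - Q s s u (Rinv s u x) = x)]) ->
  (forall eps : R, 0 < eps -> exists C : R,
     forall s, eps < s -> s <= r0 -> forall u, U u ->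
       forall x : X s, `|Rinv s u x| <= C * `|x|) ->
  equiv_regular R j r0 gamma U (fun s r u x => j s r (Rinv r u x)).
Proof.
move=> hr0 hg0 hgr hj hjid hjcomp hne hU hconv hQ hRinv hRb.
exact: (@main_result R r0 gamma X j B U hj hjid hjcomp hU Q hQ hg0 Rinv hRinv hRb).
Qed.
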